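(* Fix $x\in\mathbb{C}$. The function $f:[0,\infty)\to\mathbb{R}$ defined by $$f(s):=\log\Big(\frac{1+a+\sqrt{(1+a)^2-b^2}}{2}\Big),\qquad a:=|x|^2+s,\quad b:=2|x|\sqrt{s},$$ (i.e. $f(|y|^2)$ with $a=|x|^2+|y|^2$, $b=2|x||y|$) is strictly increasing on $[0,\infty)$.
   Context: $\log$ is the logarithm in a fixed base. *)

(* Defs.v *)
From Stdlib Require Import Reals.
From Coquelicot Require Import Coquelicot.
Open Scope R_scope.

Definition logb (beta t : R) : R := ln t / ln beta.

Definition f_x (beta : R) (x : C) (s : R) : R :=
  let a := (Cmod x) ^ 2 + s in
  let b := 2 * Cmod x * sqrt s in
  logb beta ((1 + a + sqrt ((1 + a) ^ 2 - b ^ 2)) / 2).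

(* Main.v *)
Require Import Defs.
From Stdlib Require Import Reals Lra Psatz.
From Coquelicot Require Import Coquelicot.
Open Scope R_scope.

Lemma key (c s t : R) : 0 <= c -> 0 <= s -> s < t ->
  1 + (c + s) + sqrt ((1 + (c + s)) ^ 2 - 4 * c * s) <
  1 + (c + t) + sqrt ((1 + (c + t)) ^ 2 - 4 * c * t).
Proof.
  intros Hc Hs Hst.
  assert (Ds : 0 <= (1 + (c + s)) ^ 2 - 4 * c * s).
  { replace ((1 + (c + s)) ^ 2 - 4 * c * s) with ((s - c + 1) ^ 2 + 4 * c) by ring. pose proof (pow2_ge_0 (s - c + 1)); lra. }
  assert (Dt : 0 <= (1 + (c + t)) ^ 2 - 4 * c * t).
  { replace ((1 + (c + t)) ^ 2 - 4 * c * t) with ((t - c + 1) ^ 2 + 4 * c) by ring. pose proof (pow2_ge_0 (t - c + 1)); lra. }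
  pose proof (sqrt_pos ((1 + (c + s)) ^ 2 - 4 * c * s)) as HA.
  pose proof (sqrt_pos ((1 + (c + t)) ^ 2 - 4 * c * t)) as HB.
  pose proof (pow2_sqrt _ Ds) as EA.
  pose proof (pow2_sqrt _ Dt) as EB.
  set (A := sqrt ((1 + (c + s)) ^ 2 - 4 * c * s)) in *.
  set (B := sqrt ((1 + (c + t)) ^ 2 - 4 * c * t)) in *.
  assert (HB2 : B > -(t - c + 1)).
  { destruct (Rlt_or_le 0 (t - c + 1)) as [H|H]. lra.
    assert (B ^ 2 > (t - c + 1) ^ 2) by nra. nra. }
  assert (A < B + (t - s)).
  { assert (A ^ 2 < (B + (t - s)) ^ 2) by nra. nra. }
  lra.
Qed.

Theorem lemma2 (beta : R) (Hbeta : 1 < beta) (x : C) :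
  forall s t : R, 0 <= s -> s < t -> f_x beta x s < f_x beta x t.
Proof.
  intros s t Hs Hst.
  unfold f_x, logb.
  assert (Hlb : 0 < ln beta) by (rewrite <- ln_1; apply ln_increasing; lra).
  pose proof (Cmod_ge_0 x) as Hr.
  set (r := Cmod x) in *.
  assert (E : forall u, 0 <= u -> (2 * r * sqrt u) ^ 2 = 4 * (r ^ 2) * u).
  { intros u Hu. rewrite !Rpow_mult_distr, pow2_sqrt by lra. ring. }
  rewrite (E s Hs), (E t ltac:(lra)).
  pose proof (key (r ^ 2) s t ltac:(nra) Hs Hst) as K.
  assert (P : 0 < 1 + (r ^ 2 + s) + sqrt ((1 + (r ^ 2 + s)) ^ 2 - 4 * r ^ 2 * s)).
  { pose proof (sqrt_pos ((1 + (r ^ 2 + s)) ^ 2 - 4 * r ^ 2 * s)). nra. }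
  unfold Rdiv. apply Rmult_lt_compat_r. apply Rinv_0_lt_compat; lra.
  apply ln_increasing; lra.
Qed.
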